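(* For every Hausdorff topological vector space $\mathcal X$ over $\mathbb K$, the exponential vector space $\mathcal C(\mathcal X)$ has a basis, i.e. $\mathcal C(\mathcal X)\smallsetminus[\mathcal C(\mathcal X)]_0$ has a basis.
   Context: $\mathbb K$ is $\mathbb R$ or $\mathbb C$. An exponential vector space (evs) over a field $K$ is a partially ordered set $(X,\leq)$ with a binary operation $+$ on $X$ and a map $K\times X\to X$, $(\alpha,x)\mapsto \alpha x$, such that: (A1) $(X,+)$ is a commutative semigroup with identity $\theta$; (A2) $x\leq y$ implies $x+z\leq y+z$ and $\alpha x\leq \alpha y$ for all $z\in X$, $\alpha\in K$; (A3) $\alpha(x+y)=\alpha x+\alpha y$, $\alpha(\beta x)=(\alpha\beta)x$, $(\alpha+\beta)x\leq \alpha x+\beta x$, $1x=x$; (A4) $\alpha x=\theta$ iff $\alpha=0$ or $x=\theta$; (A5) $x+(-1)x=\theta$ iff $x\in X_0$, where $X_0:=\{z\in X: y\not\leq z \text{ for all } y\in X\smallsetminus\{z\}\}$ (the set of minimal elements); (A6) for each $x\in X$ there is $p\in X_0$ with $p\leq x$. $\mathcal C(\mathcal X)$ is the set of nonempty compact subsets of $\mathcal X$ with $A+B:=\{a+b:a\in A,b\in B\}$, $\alpha A:=\{\alpha a:a\in A\}$, and order given by set inclusion; it is an evs over $\mathbb K$ whose primitive space consists of the singletons. For $x\in X\smallsetminus X_0$ let $L(x):=\{z\in X: z\geq \alpha x+p \text{ for some } \alpha\in K\smallsetminus\{0\},\ p\in X_0\}$. A subset $B\subseteq X\smallsetminus X_0$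 generates $X\smallsetminus X_0$ if $X\smallsetminus X_0=\bigcup_{b\in B}L(b)$. Elements $x,y\in X\smallsetminus X_0$ are orderly dependent if $x\in L(y)$ or $y\in L(x)$, and orderly independent otherwise; $B$ is orderly independent if any two distinct members are orderly independent. A basis of $X\smallsetminus X_0$ is an orderly independent generating subset. *)

(* Defs.v *)
From HB Require Import structures.
From mathcomp Require Import all_boot all_order all_algebra.
From mathcomp Require Import all_classical all_reals all_analysis.
From mathcomp Require Import complex.
Set Implicit Arguments. Unset Strict Implicit. Unset Printing Implicit Defensive.
Import Order.TTheory GRing.Theory Num.Theory.
Local Open Scope classical_set_scope.
Local Open Scope ring_scope.

Section EvsNotions.
Variables (K : numFieldType) (T : Type) (X : set T) (le : T -> T -> Prop)
  (add : T -> T -> T) (smul : K -> T -> T).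

Definition primitive : set T :=
  [set z | X z /\ forall y, X y -> y <> z -> ~ le y z].

Definition Lset (x : T) : set T :=
  [set z | X z /\ exists alpha : K, alpha != 0 /\
     exists p, primitive p /\ le (add (smul alpha x) p) z].

Definition generates (B : set T) : Prop :=
  B `<=` X `\` primitive /\
  X `\` primitive = \bigcup_(b in B) Lset b.

Definition orderly_dependent (x y : T) : Prop := Lset y x \/ Lset x y.

Definition orderly_independent_set (B : set T) : Prop :=
  forall x y, B x -> B y -> x <> y -> ~ orderly_dependent x y.

Definition is_basis (B : set T) : Prop :=
  orderly_independent_set B /\ generates B.

Definition has_basis : Prop := exists B : set T, is_basis B.
End EvsNotions.

Section CompactEvs.
Variables (K : numFieldType) (E : topologicalLmodType K).

Definition CX : set (set E) := [set A | A !=set0 /\ compact A].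

Definition set_add (A B : set E) : set E :=
  [set z | exists a, A a /\ exists b, B b /\ z = a + b].

Definition set_scale (alpha : K) (A : set E) : set E :=
  [set z | exists a, A a /\ z = alpha *: a].

Definition CX_has_basis : Prop :=
  has_basis CX (fun A B : set E => A `<=` B) set_add set_scale.
End CompactEvs.

(* Main.v *)
Require Import Defs.
From HB Require Import structures.
From mathcomp Require Import all_boot all_order all_algebra.
From mathcomp Require Import all_classical all_reals all_analysis.
From mathcomp Require Import complex.
Set Implicit Arguments. Unset Strict Implicit. Unset Printing Implicit Defensive.
Import Order.TTheory GRing.Theory Num.Theory.
Local Open Scope classical_set_scope.
Local Open Scope ring_scope.

Section Gen.
Variables (K : numFieldType) (E : topologicalLmodType K).

Local Notation CXE := (@CX K E).

Definition line (x : E) : set E := [set y | y != 0 /\ exists c : K, y = c *: x].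
Definition rep (x : E) : E := xget 0 (line x).

Lemma rep_line x : x != 0 -> line x (rep x).
Proof. move=> x0; apply: xgetPex; exists x; split => //; exists 1; by rewrite scale1r. Qed.

Lemma line_eq x y c : y != 0 -> y = c *: x -> line y = line x.
Proof.
move=> y0 yc; have c0 : c != 0 by apply: contraNneq y0 => c0; rewrite yc c0 scale0r.
apply/seteqP; split => z [z0 [k zk]]; split => //.
- exists (k * c); by rewrite zk yc scalerA.
- exists (k / c); by rewrite zk yc scalerA -mulrA mulVf // mulr1.
Qed.

Lemma rep_eq x y c : y != 0 -> y = c *: x -> rep y = rep x.
Proof. by move=> y0 yc; rewrite /rep (line_eq y0 yc). Qed.

Lemma rep_idem x : x != 0 -> rep (rep x) = rep x.
Proof. move=> x0; have [r0 [c rc]] := rep_line x0; exact: (rep_eq r0 rc). Qed.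

Definition two (r : E) : set E := [set 0] `|` [set r].

Definition Bas : set (set E) := [set A | exists x : E, x != 0 /\ A = two (rep x)].

Lemma CX_two r : CXE (two r).
Proof. split; first by exists 0; left. apply: compactU; exact: compact_set1. Qed.

Lemma CX1 (a : E) : CXE [set a].
Proof. split; [by exists a | exact: compact_set1]. Qed.

Lemma two_sub alpha (r : E) (p : set E) z q : p q ->
  set_add (set_scale alpha (two r)) p `<=` z -> z q /\ z (alpha *: r + q).
Proof.
move=> pq sub; split; apply: sub.
- exists 0; split; last (exists q; split => //); first by exists 0; split; [left|rewrite scaler0].
  by rewrite add0r.
- exists (alpha *: r); split; first by exists r; split => //; right.
  by exists q.
Qed.

Lemma notprim (z : set E) u v : CXE z -> z u -> z v -> u != v ->
  ~ primitive CXE (fun A B : set E => A `<=` B) z.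
Proof.
move=> Cz zu zv uv [_ H]; apply: (H [set u] (CX1 u)).
- move=> e; have : [set u] v by rewrite e.
  by move=> /= vu; move: uv; rewrite vu eqxx.
- by move=> w /= ->.
Qed.

Lemma CX_has_basis_gen : CX_has_basis E.
Proof.
exists Bas; split.
- move=> A A' [x [x0 ->]] [y [y0 ->]] neq.
  have key : forall x y : E, x != 0 -> y != 0 ->
      Lset CXE (fun A B : set E => A `<=` B) (@set_add K E) (@set_scale K E) (two (rep x)) (two (rep y)) ->
      two (rep y) = two (rep x).
    clear; move=> x y x0 y0 [_ [alpha [a0 [p [[[[q pq] _] _] sub]]]]].
    have [h1 h2] := two_sub pq sub.
    have [rx0 [c rxc]] := rep_line x0.
    have [ry0 [d ryd]] := rep_line y0.
    have ne : q != alpha *: rep x + q.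
      by rewrite eq_sym -subr_eq0 addrK scaler_eq0 negb_or a0.
    suff [k rk] : exists k : K, rep y = k *: rep x.
      have := rep_eq ry0 rk; rewrite rep_idem // => ->; by rewrite rep_idem.
    case: h1 => /= qe; case: h2 => /= he.
    + by move: ne; rewrite he qe eqxx.
    + by exists alpha; rewrite -he qe addr0.
    + by exists (- alpha); rewrite scaleNr -qe; apply/eqP; rewrite -addr_eq0 addrC he.
    + by move: ne; rewrite he qe eqxx.
  case => H.
  + by apply: neq; apply: key.
  + by apply: neq; symmetry; apply: key.
- split.
  + move=> A [x [x0 ->]]; split; first exact: CX_two.
    have [r0 _] := rep_line x0.
    apply: (@notprim _ 0 (rep x) (CX_two _)); [by left|by right|by rewrite eq_sym].
  + apply/seteqP; split.
    * move=> z [Cz np].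
      have [u zu] : exists u, z u.
        case: Cz => [[u zu] _]; by exists u.
      have [v [zv vu]] : exists v, z v /\ v != u.
        apply: contrapT => nex; apply: np; split => // y Cy yz sub.
        apply: yz; apply/seteqP; split => // w zw.
        have wu : w = u.
          by apply: contrapT => wu; apply: nex; exists w; split => //; apply/eqP.
        have [[t yt] _] := Cy; have := sub _ yt.
        have tu : t = u.
          by apply: contrapT => tu; apply: nex; exists t; split => //; [apply: sub | apply/eqP].
        by move=> _; rewrite wu -tu.
      have x0 : v - u != 0 by rewrite subr_eq0.
      exists (two (rep (v - u))); first by exists (v - u).
      split => //.
      have [r0 [c rc]] := rep_line x0.
      have c0 : c != 0 by apply: contraNneq r0 => c0; rewrite rc c0 scale0r.
      exists c^-1; split; first by rewrite invr_eq0.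
      exists [set u]; split.
        split; first exact: CX1.
        move=> y Cy yne sub; apply: yne; apply/seteqP; split => // w /= ->.
        have [[t yt] _] := Cy; by have := sub _ yt => /= <-.
      move=> w [a [[b [hb ->]] [e [/= -> ->]]]].
      case: hb => /= ->; first by rewrite scaler0 add0r.
      by rewrite rc scalerA mulVf // scale1r subrK.
    * move=> z [b [x [x0 ->]] [Cz [alpha [a0 [p [[[[q pq] _] _] sub]]]]]].
      split => //.
      have [h1 h2] := two_sub pq sub.
      have [rx0 _] := rep_line x0.
      apply: (notprim Cz h1 h2).
      by rewrite eq_sym -subr_eq0 addrK scaler_eq0 negb_or a0.
Qed.
End Gen.

Theorem mainTheorem11 (R : realType) :
  (forall E : topologicalLmodType R,
      hausdorff_space E -> CX_has_basis E) /\
  (forall E : topologicalLmodType R[i],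
      hausdorff_space E -> CX_has_basis E).
Proof.
split => E _; exact: CX_has_basis_gen.
Qed.
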